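(* In the setting described in the context, assume $\varphi_2^{(\tau)}=\dots=\varphi_{n-1}^{(\tau)}=0$ for all $\tau\in T$ and that each $\varphi_1^{(\tau)}$ depends only on $x_n$ and is a group homomorphism $U_n/U_{n-1}\to U_1$ (i.e. $x_n\mapsto\varphi_1^{(\tau)}(x_n)$ is additive). Then there exists a bi-regular section $\sigma:U_n/U_{n-1}\to U_n$ of the projection $U_n\to U_n/U_{n-1}$ of the form $\sigma(x_nU_{n-1})=(f(x_n),0,\dots,0,x_n)$ with $f\in\mathsf k[\mathrm T]$ additive (i.e. $\delta^1(f)=0$, where $\delta^1(f)(x,y)=f(x)+f(y)-f(x+y)$), such that $\sigma(U_n/U_{n-1})$ is invariant under $T$.
   Context: Let $\mathsf k$ be an algebraically closed field and $G=U\rtimes T$ the semidirect product of an $n$-dimensional connected unipotent algebraic group $U$ by a $1$-dimensional connected torus $T$. Assume $U$ is identified with the affine space $\mathsf k^n$ so that: the subsets $U_i=\{(x_1,\dots,x_n): x_{i+1}=\dots=x_n=0\}$ ($0\le i\le n$) are normal subgroups of $G$; the product is $(x_1,\dots,x_n)(y_1,\dots,y_n)=(x_1+y_1+\psi_1,\ \dots,\ x_{n-1}+y_{n-1}+\psi_{n-1},\ x_n+y_n)$ where $\psi_j\in\mathsf k[x_{j+1},\dots,x_n,y_{j+1},\dots,y_n]$; and each $\tau\in T$ acts on $U$ by the automorphism $(x_1,\dots,x_n)\mapsto(a_\tau^{e_1}x_1+\varphi_1^{(\tau)}(x_2,\dots,x_n),\ \dots,\ a_\tau^{e_{n-1}}x_{n-1}+\varphi^{(\tau)}_{n-1}(x_n),\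 a_\tau^{e_n}x_n)$, where $a_\tau\in\mathsf k^*$ depends bi-regularly on $\tau$, each $\varphi^{(\tau)}_j$ is a morphism (polynomial in $x_{j+1},\dots,x_n$), and the $e_j$ are fixed integers. $U_n/U_{n-1}$ is identified with $\mathsf k$ via the coordinate $x_n$. *)

(* Defs.v *)
From HB Require Import structures.
From mathcomp Require Import all_boot all_order all_algebra.
Set Implicit Arguments. Unset Strict Implicit. Unset Printing Implicit Defensive.
Import GRing.Theory Num.Theory.
Local Open Scope ring_scope.

(* Polynomial (regular) functions on the affine space k^N = 'rV[k]_N:
   the functions generated by constants and coordinates under + and *. *)
Inductive polyfun (R : fieldType) (N : nat) : ('rV[R]_N -> R) -> Prop :=
| pf_const (c : R) : polyfun (fun _ => c)
| pf_coord (i : 'I_N) : polyfun (fun v => v ord0 i)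
| pf_add f g : polyfun f -> polyfun g -> polyfun (fun v => f v + g v)
| pf_mul f g : polyfun f -> polyfun g -> polyfun (fun v => f v * g v).

Definition is_polyfun (R : fieldType) (N : nat) (F : 'rV[R]_N -> R) : Prop :=
  exists p, polyfun p /\ forall v, F v = p v.

(* Regular functions on the torus G_m = k^* : Laurent polynomials. *)
Definition regular_Gm (R : fieldType) (F : R -> R) : Prop :=
  exists (p : {poly R}) (m : nat), forall t, t != 0 -> F t = p.[t] / t ^+ m.

Definition regular_GmA (R : fieldType) (N : nat) (F : R -> 'rV[R]_N -> R) : Prop :=
  exists (p : 'rV[R]_(1 + N) -> R) (m : nat), is_polyfun p /\
    forall t x, t != 0 -> F t x = p (row_mx (const_mx t) x) / t ^+ m.

Definition biregular_Gm (R : fieldType) (a : R -> R) : Prop :=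
  [/\ forall t, t != 0 -> a t != 0, regular_Gm a &
      exists b : R -> R, [/\ forall s, s != 0 -> b s != 0, regular_Gm b,
        forall t, t != 0 -> b (a t) = t & forall s, s != 0 -> a (b s) = s]].

Definition dep_above1 (R : fieldType) (n : nat) (i : 'I_n) (F : 'rV[R]_n -> R) :=
  forall x x' : 'rV[R]_n, (forall j : 'I_n, (i < j)%N -> x ord0 j = x' ord0 j) -> F x = F x'.
Definition dep_above2 (R : fieldType) (n : nat) (i : 'I_n)
    (F : 'rV[R]_n -> 'rV[R]_n -> R) :=
  forall x x' y y' : 'rV[R]_n, (forall j : 'I_n, (i < j)%N -> x ord0 j = x' ord0 j /\ y ord0 j = y' ord0 j) ->
    F x y = F x' y'.

(* U_i = {x : x_{i+1} = ... = x_n = 0} (1-based), i.e. 0-based coords j >= i vanish. *)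
Definition inU (R : fieldType) (n : nat) (i : nat) (x : 'rV[R]_n) : Prop :=
  forall j : 'I_n, (i <= j)%N -> x ord0 j = 0.

(* The standing setting of the paper: U = k^n with triangular polynomial group law
   (identity 0), T = G_m acting by triangular automorphisms, U_i normal in G. *)
Definition setting (k : fieldType) (n : nat)
    (mul : 'rV[k]_n -> 'rV[k]_n -> 'rV[k]_n) (inv : 'rV[k]_n -> 'rV[k]_n)
    (psi : 'I_n -> 'rV[k]_n -> 'rV[k]_n -> k)
    (a : k -> k) (e : 'I_n -> int) (phi : 'I_n -> k -> 'rV[k]_n -> k)
    (act : k -> 'rV[k]_n -> 'rV[k]_n) : Prop :=
  [/\
      [/\ forall x y z, mul x (mul y z) = mul (mul x y) z,
          forall x, mul 0 x = x /\ mul x 0 = x,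
          forall x, mul x (inv x) = 0 /\ mul (inv x) x = 0,
          forall i : 'I_n, is_polyfun (fun x => inv x ord0 i) &
          forall i : 'I_n, is_polyfun (fun v : 'rV[k]_(n + n) => mul (lsubmx v) (rsubmx v) ord0 i)],
      [/\ forall x y, mul x y = \row_(i < n) (x ord0 i + y ord0 i + psi i x y),
          forall i : 'I_n, is_polyfun (fun v : 'rV[k]_(n + n) => psi i (lsubmx v) (rsubmx v)),
          forall i : 'I_n, dep_above2 i (psi i) &
          forall i : 'I_n, val i = n.-1 -> forall x y, psi i x y = 0],
      (* the U_i are normal subgroups of G = U x| T *)
      (forall i : nat, (i <= n)%N ->
        [/\ forall x y, inU i x -> inU i y -> inU i (mul x y),
            forall x, inU i x -> inU i (inv x),
            forall g x, inU i x -> inU i (mul (mul g x) (inv g)) &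
            forall t x, t != 0 -> inU i x -> inU i (act t x)]),
      [/\ biregular_Gm a,
          forall x, act 1 x = x,
          forall t s x, t != 0 -> s != 0 -> act (t * s) x = act t (act s x),
          forall t x y, t != 0 -> act t (mul x y) = mul (act t x) (act t y) &
          forall i : 'I_n, regular_GmA (fun t x => act t x ord0 i)] &
      [/\ forall t x, t != 0 -> act t x = \row_(i < n) ((a t) ^ (e i) * x ord0 i + phi i t x),
          forall t (i : 'I_n), t != 0 -> is_polyfun (phi i t),
          forall t (i : 'I_n), t != 0 -> dep_above1 i (phi i t) &
          forall t (i : 'I_n), t != 0 -> val i = n.-1 -> forall x, phi i t x = 0]].

Definition lastvec (k : fieldType) (n : nat) (t : k) : 'rV[k]_n :=
  \row_(j < n) (if val j == n.-1 then t else 0).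

Definition sect (k : fieldType) (n : nat) (f : {poly k}) (t : k) : 'rV[k]_n :=
  \row_(j < n) (if val j == 0%N then f.[t] else if val j == n.-1 then t else 0).

Definition delta1 (k : fieldType) (f : {poly k}) (x y : k) : k :=
  f.[x] + f.[y] - f.[x + y].

(* Main.v *)
Require Import Defs.
From HB Require Import structures.
From mathcomp Require Import all_boot all_order all_algebra.
From Stdlib Require Import Classical ClassicalEpsilon.
Import GRing.Theory Num.Theory.
Local Open Scope ring_scope.

Set Implicit Arguments. Unset Strict Implicit.
Local Open Scope ring_scope.

Section Helpers.
Variable k : closedFieldType.

Lemma inf_k (s : seq k) : exists x, x \notin s.
Proof.
case: s => [|a s]; first by exists 0.
set p := \prod_(b <- a :: s) ('X - b%:P) + 1.
have sp : size p != 1%N.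
  rewrite /p size_polyDl ?size_prod_XsubC ?size_poly1 //.
have [x rx] := closed_rootP p sp.
exists x; apply/negP => xs.
move: rx; rewrite /root /p hornerD horner_prod hornerC.
rewrite (big_rem x xs) /= hornerXsubC subrr mul0r add0r oner_eq0 //.
Qed.

Lemma uniq_seq (N : nat) : exists s : seq k, uniq s /\ size s = N.
Proof.
elim: N => [|N [s [us ss]]]; first by exists [::].
have [x xs] := inf_k s; exists (x :: s); by rewrite /= xs us ss.
Qed.

Lemma vanish (p : {poly k}) : (forall x, p.[x] = 0) -> p = 0.
Proof.
move=> H; apply/eqP; apply/negPn/negP => p0.
have [s [us ss]] := uniq_seq (size p).
suff: all (root p) s by move/(max_poly_roots p0)/(_ us); rewrite ss ltnn.
by apply/allP => x _; rewrite /root H.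
Qed.

Lemma vanish_nz (p : {poly k}) : (forall x, x != 0 -> p.[x] = 0) -> p = 0.
Proof.
move=> H; have: p * 'X = 0.
  apply: vanish => x; rewrite hornerMX.
  by case: (eqVneq x 0) => [->|/H ->]; rewrite ?mulr0 ?mul0r.
by move/eqP; rewrite mulf_eq0 polyX_eq0 orbF => /eqP.
Qed.

Lemma coef_vanish (N : nat) (w : nat -> k) :
  (forall u, u != 0 -> \sum_(d < N) w d * u ^+ d = 0) ->
  forall d, (d < N)%N -> w d = 0.
Proof.
move=> H d dN.
have: \poly_(i < N) w i = 0 by apply: vanish_nz => u u0; rewrite horner_poly H.
by move=> E; have := congr1 (fun q : {poly k} => q`_d) E; rewrite /= coef_poly dN coef0.
Qed.


Lemma addhom_zero (q : k -> k) (P : {poly k}) (m : nat) :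
  (forall t, t != 0 -> q t = P.[t] / t ^+ m) ->
  (forall t s, t != 0 -> s != 0 -> q (t * s) = q t + q s) ->
  forall s, s != 0 -> q s = 0.
Proof.
move=> Hq Ha s s0.
set N := maxn (size P) m.+1.
set D := \poly_(j < N) (P`_j * s ^+ j) - s ^+ m *: P - (q s * s ^+ m) *: 'X^m.
have E t : t != 0 -> P.[t * s] = s ^+ m * P.[t] + q s * s ^+ m * t ^+ m.
  move=> t0; have ts0 : t * s != 0 by rewrite mulf_neq0.
  rewrite -[P.[t * s]](@divfK _ ((t * s) ^+ m)) ?expf_neq0 //.
  rewrite -Hq // Ha // Hq // exprMn mulrDl mulrA divfK ?expf_neq0 //.
  by rewrite [P.[t] * _]mulrC [t ^+ m * _]mulrC mulrA.
have D0 : D = 0.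
  apply: vanish_nz => t t0.
  rewrite /D !hornerD !hornerN !hornerZ hornerXn horner_poly.
  rewrite -addrA -opprD -(E t t0) (@horner_coef_wide _ N); last by rewrite leq_maxl.
  apply/eqP; rewrite subr_eq0; apply/eqP.
  by apply: eq_bigr => i _; rewrite exprMn [t ^+ i * _]mulrC mulrA.
have := congr1 (fun r : {poly k} => r`_m) D0.
rewrite /D /= !coefD !coefN !coefZ coef_poly coefXn eqxx leq_maxr.
rewrite coef0 [P`_m * _]mulrC subrr sub0r => /eqP; rewrite oppr_eq0 mulr1.
by rewrite mulf_eq0 expf_eq0 (negPf s0) andbF orbF => /eqP.
Qed.

Lemma char_mono (chi : k -> k) (R : {poly k}) (m : nat) :
  (forall t, t != 0 -> chi t = R.[t] / t ^+ m) ->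
  (forall t s, t != 0 -> s != 0 -> chi (t * s) = chi t * chi s) -> chi 1 != 0 ->
  exists j : nat, forall t, t != 0 -> chi t = t ^+ j / t ^+ m.
Proof.
move=> Hc Hm c1.
have RM t s : t != 0 -> s != 0 -> R.[t * s] = R.[t] * R.[s].
  move=> t0 s0; have ts0 : t * s != 0 by rewrite mulf_neq0.
  rewrite -[R.[t * s]](@divfK _ ((t * s) ^+ m)) ?expf_neq0 //.
  rewrite -Hc // Hm // !Hc // exprMn mulrACA !divfK ?expf_neq0 //.
have R0 : R != 0.
  apply/negP => /eqP R0; move: c1; rewrite Hc ?oner_eq0 // R0 horner0 mul0r eqxx //.
exists (size R).-1 => s s0; rewrite Hc //; congr (_ / _).
set D := \poly_(i < size R) (R`_i * s ^+ i) - R.[s] *: R.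
have D0 : D = 0.
  apply: vanish_nz => t t0.
  rewrite /D hornerD hornerN hornerZ horner_poly -RM // (horner_coef R (s * t)).
  apply/eqP; rewrite subr_eq0; apply/eqP.
  by apply: eq_bigr => i _; rewrite exprMn mulrA.
have := congr1 (fun r : {poly k} => r`_(size R).-1) D0.
rewrite /D /= coefD coefN coefZ coef_poly coef0 prednK ?size_poly_gt0 // ?leqnn.
have lc0 : lead_coef R != 0 by rewrite lead_coef_eq0.
move/eqP; rewrite subr_eq0 -/(lead_coef R) mulrC => /eqP /(mulIf lc0) //.
Qed.


Lemma polyfun_biv (n : nat) (p : 'rV[k]_(1 + n) -> k) (y : 'rV[k]_n) : polyfun p ->
  exists Q : {poly {poly k}}, forall t u, p (row_mx (const_mx t) (u *: y)) = (Q.[u%:P]).[t].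
Proof.
elim=> [c|i|f g _ [Qf Hf] _ [Qg Hg]|f g _ [Qf Hf] _ [Qg Hg]].
- by exists c%:P%:P => t u; rewrite !hornerC.
- case: (split i) (splitK i) => j <- /=.
    by exists ('X)%:P => t u; rewrite row_mxEl mxE hornerC hornerX.
  exists ((y ord0 j)%:P%:P * 'X) => t u.
  by rewrite row_mxEr mxE hornerMX hornerC -polyCM hornerC mulrC.
- by exists (Qf + Qg) => t u; rewrite Hf Hg !hornerD.
- by exists (Qf * Qg) => t u; rewrite Hf Hg !hornerM.
Qed.

Lemma biv_sum (Q : {poly {poly k}}) t u :
  (Q.[u%:P]).[t] = \sum_(d < size Q) (Q`_d).[t] * u ^+ d.
Proof.
rewrite (horner_coef Q) horner_sum; apply: eq_bigr => i _.
by rewrite hornerM -rmorphXn hornerC.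
Qed.

End Helpers.

Lemma aux4 (R : comRingType) (x y z w : R) : y + z = w + x -> x - y = z - w.
Proof. move=> H; apply/eqP; rewrite subr_eq addrAC -[z + y]addrC H addrC addKr //. Qed.

Unset Implicit Arguments.
Set Strict Implicit.

Theorem mainTheorem8 (k : closedFieldType) (n : nat) (hn : (2 <= n)%N)
    (mul : 'rV[k]_n -> 'rV[k]_n -> 'rV[k]_n) (inv : 'rV[k]_n -> 'rV[k]_n)
    (psi : 'I_n -> 'rV[k]_n -> 'rV[k]_n -> k)
    (a : k -> k) (e : 'I_n -> int) (phi : 'I_n -> k -> 'rV[k]_n -> k)
    (act : k -> 'rV[k]_n -> 'rV[k]_n) :
  setting mul inv psi a e phi act ->
  (forall (t : k) (i : 'I_n), t != 0 -> (0 < val i < n.-1)%N -> forall x, phi i t x = 0) ->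
  (forall (t : k) (i : 'I_n), t != 0 -> val i = 0%N ->
     forall x x' : 'rV[k]_n, (forall j : 'I_n, val j = n.-1 -> x ord0 j = x' ord0 j) ->
     phi i t x = phi i t x') ->
  (forall (t : k) (i : 'I_n), t != 0 -> val i = 0%N -> forall u v,
     phi i t (lastvec n (u + v)) = phi i t (lastvec n u) + phi i t (lastvec n v)) ->
  exists f : {poly k},
    (forall x y, delta1 f x y = 0) /\
    (forall t : k, t != 0 -> forall u, exists u', act t (sect n f u) = sect n f u').
Proof.
move: mul inv psi e phi act; case: n hn => [|[|m]] // _ mul inv psi e phi act.
case=> _ _ _ [[anz _ _] _ actM _ actreg] [actE _ _ philast] Hmid Hdep0 Hadd.
pose i0 : 'I_m.+2 := ord0.
pose il : 'I_m.+2 := ord_max.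
pose chi0 t := a t ^ e i0.
pose chi1 t := a t ^ e il.
pose g t u := phi i0 t (lastvec m.+2 u).
have lvE u (j : 'I_m.+2) : lastvec m.+2 u ord0 j = if val j == m.+1 then u else 0.
  by rewrite mxE.
have gdep t x : t != 0 -> phi i0 t x = g t (x ord0 il).
  move=> t0; apply: Hdep0 => // j /= jl.
  have -> : j = il by apply/val_inj.
  by rewrite lvE /= eqxx.
have coord0 t x : t != 0 -> act t x ord0 i0 = chi0 t * x ord0 i0 + g t (x ord0 il).
  by move=> t0; rewrite actE // mxE gdep.
have coordl t x : t != 0 -> act t x ord0 il = chi1 t * x ord0 il.
  by move=> t0; rewrite actE // mxE philast // addr0.
have coordm t x (j : 'I_m.+2) : t != 0 -> (0 < j < m.+1)%N -> act t x ord0 j = a t ^ e j * x ord0 j.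
  by move=> t0 jm; rewrite actE // mxE Hmid // addr0.
have gadd t u v : t != 0 -> g t (u + v) = g t u + g t v by move=> t0; apply: Hadd.
have g0 t : t != 0 -> g t 0 = 0.
  by move=> t0; have := gadd t 0 0 t0; rewrite addr0 => /eqP; rewrite -subr_eq subrr eq_sym => /eqP.
have chi0nz t : t != 0 -> chi0 t != 0 by move=> t0; rewrite expfz_neq0 ?anz.
have lv0 u : lastvec m.+2 u ord0 i0 = 0 by rewrite lvE.
have lvl u : lastvec m.+2 u ord0 il = u by rewrite lvE /= eqxx.
have cocy t s u : t != 0 -> s != 0 -> g (t * s) u = chi0 t * g s u + g t (chi1 s * u).
  move=> t0 s0.
  have := coord0 (t * s) (lastvec m.+2 u) (mulf_neq0 t0 s0).
  rewrite actM // coord0 // coord0 // coordl // !lv0 !lvl !mulr0 !add0r => <-.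
  by [].
have [p0 [M [[p0' [pf0 Ep0]] Hr]]] := actreg i0.
have [Q HQ] := polyfun_biv (lastvec m.+2 1) pf0.
pose c t d := (Q`_d).[t] / t ^+ M.
pose N := size Q.
have lvZ u : lastvec m.+2 u = u *: lastvec m.+2 1.
  by apply/rowP => j; rewrite !mxE; case: ifP; rewrite ?mulr1 ?mulr0.
have gE t u : t != 0 -> g t u = \sum_(d < N) c t d * u ^+ d.
  move=> t0; have := coord0 t (lastvec m.+2 u) t0.
  rewrite lv0 lvl mulr0 add0r => <-.
  rewrite Hr // Ep0 lvZ HQ biv_sum mulr_suml; apply: eq_bigr => d _.
  by rewrite mulrAC.
pose y0 : 'rV[k]_m.+2 := \row_(j < m.+2) (if val j == 0%N then 1 else 0).
have y00 : y0 ord0 i0 = 1 by rewrite mxE.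
have y0l : y0 ord0 il = 0 by rewrite mxE.
have chiy t : t != 0 -> act t y0 ord0 i0 = chi0 t.
  by move=> t0; rewrite coord0 // y00 y0l g0 // mulr1 addr0.
have chiM t s : t != 0 -> s != 0 -> chi0 (t * s) = chi0 t * chi0 s.
  move=> t0 s0; rewrite -chiy ?mulf_neq0 // actM // coord0 // chiy // coordl // y0l.
  by rewrite mulr0 g0 // addr0.
have [Q0 HQ0] := polyfun_biv y0 pf0.
have chiR t : t != 0 -> chi0 t = (Q0.[1%:P]).[t] / t ^+ M.
  by move=> t0; rewrite -chiy // Hr // Ep0 -HQ0 scale1r.
have [jj Hjj] := char_mono chiR chiM (chi0nz 1 (oner_neq0 _)).
have cN t d : (N <= d)%N -> c t d = 0.
  by move=> dN; rewrite /c nth_default // horner0 mul0r.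
have ccoc t s d : t != 0 -> s != 0 ->
    c (t * s) d = chi0 t * c s d + c t d * chi1 s ^+ d.
  move=> t0 s0; case: (ltnP d N) => dN; last by rewrite !cN // mulr0 mul0r addr0.
  apply/eqP; rewrite -subr_eq0 opprD addrA; apply/eqP.
  apply: (@coef_vanish _ N (fun d => c (t * s) d - chi0 t * c s d - c t d * chi1 s ^+ d)) => // u u0.
  have := cocy t s u t0 s0; rewrite !gE ?mulf_neq0 // mulr_sumr => E.
  under eq_bigr => i _ do rewrite !mulrBl.
  rewrite !sumrB E.
  have -> : \sum_(i < N) chi0 t * (c s i * u ^+ i) = \sum_(i < N) chi0 t * c s i * u ^+ i.
    by apply: eq_bigr => i _; rewrite mulrA.
  have -> : \sum_(i < N) c t i * (chi1 s * u) ^+ i = \sum_(i < N) c t i * chi1 s ^+ i * u ^+ i.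
    by apply: eq_bigr => i _; rewrite exprMn mulrA.
  by rewrite -addrA -opprD subrr.
have Bex d : exists b, (forall s, s != 0 -> c s d = b * (chi1 s ^+ d - chi0 s)) /\
    (b = 0 \/ exists t0, t0 != 0 /\ chi1 t0 ^+ d != chi0 t0).
  case: (classic (exists t0, t0 != 0 /\ chi1 t0 ^+ d != chi0 t0)) => [[t0 [t00 ht0]]|hno].
    exists (c t0 d / (chi1 t0 ^+ d - chi0 t0)); split; last by right; exists t0.
    move=> s s0; have D0 : chi1 t0 ^+ d - chi0 t0 != 0 by rewrite subr_eq0.
    suff H : c s d * (chi1 t0 ^+ d - chi0 t0) = c t0 d * (chi1 s ^+ d - chi0 s).
      by rewrite mulrAC -H mulfK.
    have h1 := ccoc t0 s d t00 s0; have h2 := ccoc s t0 d s0 t00.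
    rewrite [s * t0]mulrC h1 in h2.
    rewrite !mulrBr; apply: aux4.
    by rewrite [c s d * chi0 t0]mulrC [c t0 d * chi0 s]mulrC.
  have hno' t0 : t0 != 0 -> chi1 t0 ^+ d = chi0 t0.
    move=> t00; apply/eqP/negP => /negP h; apply: hno; exists t0; by split.
  exists 0; split; last by left.
  move=> s s0; rewrite mul0r.
  pose q t := c t d / chi0 t.
  have qE t : t != 0 -> q t = (Q`_d).[t] / t ^+ jj.
    by move=> t0; rewrite /q /c Hjj // invf_div mulrA divfK ?expf_neq0.
  have qadd t s' : t != 0 -> s' != 0 -> q (t * s') = q t + q s'.
    move=> t0 s1; rewrite /q ccoc // hno' // chiM // mulrDl invfM.
    rewrite mulrACA mulfV ?chi0nz // mul1r mulrACA mulfV ?chi0nz // mulr1 addrC //.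
  have := addhom_zero qE qadd s0; rewrite /q => /eqP.
  by rewrite mulf_eq0 invr_eq0 (negPf (chi0nz s s0)) orbF => /eqP.
pose Bsig := fun d => constructive_indefinite_description _ (Bex d).
pose B d := proj1_sig (Bsig d).
have HB d : (forall s, s != 0 -> c s d = B d * (chi1 s ^+ d - chi0 s)) /\
    (B d = 0 \/ exists t0, t0 != 0 /\ chi1 t0 ^+ d != chi0 t0) := proj2_sig (Bsig d).
exists (\poly_(d < N) B d); split.
  have cD t x y d : t != 0 -> (d < N)%N -> c t d * ((x + y) ^+ d - x ^+ d - y ^+ d) = 0.
    move=> t0 dN.
    apply: (@coef_vanish _ N (fun d => c t d * ((x + y) ^+ d - x ^+ d - y ^+ d))) => // l l0.
    have F z : \sum_(d < N) c t d * (l * z) ^+ d = \sum_(d < N) c t d * z ^+ d * l ^+ d.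
      by apply: eq_bigr => i _; rewrite exprMn [l ^+ i * _]mulrC mulrA.
    have := gadd t (l * x) (l * y) t0; rewrite -mulrDr !gE // => E.
    under eq_bigr => i _ do rewrite !mulrBr !mulrBl.
    by rewrite !sumrB -!F E -addrA -opprD subrr.
  have BD x y d : (d < N)%N -> B d * ((x + y) ^+ d - x ^+ d - y ^+ d) = 0.
    move=> dN; case: (HB d) => Hc [->|[t0 [t00 ht0]]]; first by rewrite mul0r.
    have := cD t0 x y d t00 dN; rewrite Hc // mulrAC => /eqP.
    by rewrite mulf_eq0 subr_eq0 (negPf ht0) orbF => /eqP.
  move=> x y; rewrite /delta1 !horner_poly -big_split -sumrB; apply: big1 => d _.
  have := BD x y d (ltn_ord d); rewrite !mulrBr => H.
  by apply/eqP; rewrite -oppr_eq0 opprB opprD addrA H.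
have KEY t u : t != 0 -> chi0 t * (\poly_(d < N) B d).[u] + g t u = (\poly_(d < N) B d).[chi1 t * u].
  move=> t0; rewrite gE // !horner_poly mulr_sumr -big_split; apply: eq_bigr => d _.
  case: (HB d) => Hc _; rewrite Hc // exprMn mulrBr mulrBl mulrCA mulrA addrC.
  by apply: (etrans (addNKr _ _)); rewrite mulrA.
move=> t t0 u; exists (chi1 t * u); apply/rowP => j; rewrite actE // !mxE.
case: (eqVneq (val j) 0%N) => [j0|j0].
  have -> : j = i0 by apply/val_inj.
  rewrite gdep // mxE /= -KEY //.
  by rewrite eqxx.
case: (eqVneq (val j) m.+1) => [jl|jl].
  have -> : j = il by apply/val_inj.
  by rewrite philast //= addr0.
rewrite Hmid ?(negPf j0) ?(negPf jl) ?mulr0 ?addr0 //.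
by rewrite lt0n j0 ltn_neqAle jl -ltnS ltn_ord.
Qed.
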